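(* The following $\Re$-modules are pairwise non-isomorphic: $R_{\frac{n-1}{2}}(-\frac14,-\frac14,-\frac14)$ for all odd $n\ge1$; $R_{\frac{n-2}{4}}(\frac{n-2}{8},\frac{n-2}{8},\frac{n-6}{8})$, $R_{\frac{n-2}{4}}(\frac{n-2}{8},\frac{n-6}{8},\frac{n-2}{8})$, $R_{\frac{n-2}{4}}(\frac{n-6}{8},\frac{n-2}{8},\frac{n-2}{8})$ for all $n\ge2$ with $n\equiv2\pmod4$; $R_{\frac{n-6}{4}}(\frac{n-2}{8},\frac{n-2}{8},\frac{n-2}{8})$ for all $n\ge6$ with $n\equiv2\pmod4$; $R_{\frac n4-1}(\frac{n-4}{8},\frac{n-4}{8},\frac n8)$, $R_{\frac n4-1}(\frac{n-4}{8},\frac n8,\frac{n-4}{8})$, $R_{\frac n4-1}(\frac n8,\frac{n-4}{8},\frac{n-4}{8})$ for all $n\ge4$ with $n\equiv0\pmod4$; $R_{\frac n4}(\frac{n-4}{8},\frac{n-4}{8},\frac{n-4}{8})$ for all $n\ge0$ with $n\equiv0\pmod4$.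
   Context: $\Re$ is the unital associative $\mathbb C$-algebra generated by $A,B,C,\Delta$ with $[A,B]=[B,C]=[C,A]=2\Delta$ and such that $\alpha=[A,\Delta]+AC-BA$, $\beta=[B,\Delta]+BA-CB$, $\gamma=[C,\Delta]+CB-AC$ are central; $\delta=A+B+C$. For $a,b,c\in\mathbb C$, $d\in\mathbb N$, $R_d(a,b,c)$ is the $(d+1)$-dimensional $\Re$-module (determined up to isomorphism) with a basis in which $A$ is lower bidiagonal with diagonal $\theta_i=(a+\frac d2-i)(a+\frac d2-i+1)$ ($0\le i\le d$) and subdiagonal entries $1$, $B$ is upper bidiagonal with diagonal $\theta^*_i=(b+\frac d2-i)(b+\frac d2-i+1)$ and superdiagonal $\varphi_i=i(i-d-1)(a+b+c+\frac d2-i+2)(a+b-c+\frac d2-i+1)$ ($1\le i\le d$), and $\alpha,\beta,\gamma,\delta$ act as the scalars $(c-b)(c+b+1)(a-\frac d2)(a+\frac d2+1)$, $(a-c)(a+c+1)(b-\frac d2)(b+\frac d2+1)$, $(b-a)(b+a+1)(c-\frac d2)(c+\frac d2+1)$, $\frac d2(\frac d2+1)+a(a+1)+b(b+1)+c(c+1)$. *)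

(* Defs.v *)
From HB Require Import structures.
From mathcomp Require Import all_boot all_order all_algebra.
Set Implicit Arguments. Unset Strict Implicit. Unset Printing Implicit Defensive.
Import Order.TTheory GRing.Theory Num.Theory.
Local Open Scope ring_scope.

(* The (d+1)-dimensional Re-module R_d(a,b,c), given by the matrices through
   which the generators A, B, C, Delta act (in the basis of the paper). *)
Section Rmod.
Variable F : numClosedFieldType.

Definition theta (x : F) (d i : nat) : F :=
  (x + d%:R / 2 - i%:R) * (x + d%:R / 2 - i%:R + 1).

Definition phiR (a b c : F) (d i : nat) : F :=
  i%:R * (i%:R - d%:R - 1) * (a + b + c + d%:R / 2 - i%:R + 2)
    * (a + b - c + d%:R / 2 - i%:R + 1).

Definition RA (d : nat) (a b c : F) : 'M[F]_(d.+1) :=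
  \matrix_(i, j) (if i == j :> nat then theta a d i
                  else if i == j.+1 :> nat then 1 else 0).

(* B: upper bidiagonal, diagonal theta*_i, superdiagonal phi_i
   (entry (i-1,i) equals phi_i, 1 <= i <= d) *)
Definition RB (d : nat) (a b c : F) : 'M[F]_(d.+1) :=
  \matrix_(i, j) (if i == j :> nat then theta b d i
                  else if j == i.+1 :> nat then phiR a b c d j else 0).

(* the scalar by which the central element delta = A + B + C acts *)
Definition Rdelta (d : nat) (a b c : F) : F :=
  d%:R / 2 * (d%:R / 2 + 1) + a * (a + 1) + b * (b + 1) + c * (c + 1).

Definition RC (d : nat) (a b c : F) : 'M[F]_(d.+1) :=
  (Rdelta d a b c)%:M - RA d a b c - RB d a b c.

Definition RD (d : nat) (a b c : F) : 'M[F]_(d.+1) :=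
  2^-1 *: (RA d a b c *m RB d a b c - RB d a b c *m RA d a b c).

Definition Riso (d1 : nat) (a1 b1 c1 : F) (d2 : nat) (a2 b2 c2 : F) : Prop :=
  exists (P : 'M[F]_(d1.+1, d2.+1)) (Q : 'M[F]_(d2.+1, d1.+1)),
    P *m Q = 1%:M /\ Q *m P = 1%:M /\
    RA d1 a1 b1 c1 *m P = P *m RA d2 a2 b2 c2 /\
    RB d1 a1 b1 c1 *m P = P *m RB d2 a2 b2 c2 /\
    RC d1 a1 b1 c1 *m P = P *m RC d2 a2 b2 c2 /\
    RD d1 a1 b1 c1 *m P = P *m RD d2 a2 b2 c2.
End Rmod.

(* The nine families of Proposition 7.7, in the order listed in the paper. *)
Inductive rfam :=
  | Fam1 | Fam2a | Fam2b | Fam2c | Fam3 | Fam4a | Fam4b | Fam4c | Fam5.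

Definition fam_valid (f : rfam) (n : nat) : bool :=
  match f with
  | Fam1 => odd n
  | Fam2a | Fam2b | Fam2c => n %% 4 == 2
  | Fam3 => (6 <= n) && (n %% 4 == 2)
  | Fam4a | Fam4b | Fam4c => (4 <= n) && (n %% 4 == 0)
  | Fam5 => n %% 4 == 0
  end%N.

(* the dimension parameter d (exact division for admissible n) *)
Definition fam_d (f : rfam) (n : nat) : nat :=
  match f with
  | Fam1 => (n - 1) %/ 2
  | Fam2a | Fam2b | Fam2c => (n - 2) %/ 4
  | Fam3 => (n - 6) %/ 4
  | Fam4a | Fam4b | Fam4c => n %/ 4 - 1
  | Fam5 => n %/ 4
  end%N.

Definition fam_abc (F : numClosedFieldType) (f : rfam) (n : nat) : F * F * F :=
  let p := (n%:R - 2) / 8 in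
  let q := (n%:R - 6) / 8 in
  let r := (n%:R - 4) / 8 in
  let s := n%:R / 8 in
  match f with
  | Fam1 => (- 4^-1, - 4^-1, - 4^-1)
  | Fam2a => (p, p, q)
  | Fam2b => (p, q, p)
  | Fam2c => (q, p, p)
  | Fam3 => (p, p, p)
  | Fam4a => (r, r, s)
  | Fam4b => (r, s, r)
  | Fam4c => (s, r, r)
  | Fam5 => (r, r, r)
  end.

Definition fam_iso (F : numClosedFieldType) (f1 : rfam) (n1 : nat)
    (f2 : rfam) (n2 : nat) : Prop :=
  let: (a1, b1, c1) := fam_abc F f1 n1 in
  let: (a2, b2, c2) := fam_abc F f2 n2 in
  Riso (fam_d f1 n1) a1 b1 c1 (fam_d f2 n2) a2 b2 c2.

(* Main.v *)
Require Import Defs.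
From mathcomp Require Import all_boot all_order all_algebra.
From mathcomp Require Import ring zify.
Set Implicit Arguments. Unset Strict Implicit. Unset Printing Implicit Defensive.
Import Order.TTheory GRing.Theory Num.Theory.
Local Open Scope ring_scope.

Section S.
Variable F : numClosedFieldType.

Lemma tr_inv d1 d2 (P : 'M[F]_(d1.+1,d2.+1)) Q (A1 : 'M_d1.+1) A2 :
  P *m Q = 1%:M -> Q *m P = 1%:M -> A1 *m P = P *m A2 -> \tr A1 = \tr A2.
Proof.
move=> PQ QP AP.
by rewrite -[A1]mulmx1 -PQ (mulmxA A1 P Q) AP -mulmxA mxtrace_mulC -mulmxA QP mulmx1.
Qed.

Definition G (y : F) (k : nat) := \sum_(i < k.+1) (y - i%:R) * (y - i%:R + 1).

Lemma G_eq y k : G y k = k.+1%:R * (y * y + y) - (2 * y + 1) * (k%:R * k.+1%:R / 2)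
   + k%:R * k.+1%:R * (2 * k%:R + 1) / 6.
Proof.
rewrite /G; elim: k => [|k IH].
  by rewrite big_ord_recr big_ord0 /=; field.
rewrite big_ord_recr /= IH.
have e1 : k.+1%:R = k%:R + 1 :> F by rewrite -natr1.
have e2 : k.+2%:R = k%:R + 1 + 1 :> F by rewrite -e1 natr1.
by rewrite e2 e1; field.
Qed.

Definition Kd (d : nat) : F := G (d%:R / 2) d.

Lemma trA d (a b c : F) : \tr (RA d a b c) = d.+1%:R * (a * (a + 1)) + Kd d.
Proof.
have -> : \tr (RA d a b c) = G (a + d%:R / 2) d.
  by rewrite /mxtrace /G; apply: eq_bigr => i _; rewrite mxE eqxx /theta; congr (_ * _); rewrite ?addrA ?addrAC //. 
by rewrite /Kd !G_eq; field.
Qed.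

Lemma trB d (a b c : F) : \tr (RB d a b c) = d.+1%:R * (b * (b + 1)) + Kd d.
Proof.
have -> : \tr (RB d a b c) = G (b + d%:R / 2) d.
  by rewrite /mxtrace /G; apply: eq_bigr => i _; rewrite mxE eqxx /theta; congr (_ * _); rewrite ?addrA ?addrAC //. 
by rewrite /Kd !G_eq; field.
Qed.

Lemma trC d (a b c : F) : \tr (RC d a b c) =
   d.+1%:R * (Rdelta d a b c) - \tr (RA d a b c) - \tr (RB d a b c).
Proof. by rewrite /RC !raddfB /= mxtrace_scalar mulr_natl. Qed.

Lemma iso_inv d1 (a1 b1 c1 : F) d2 (a2 b2 c2 : F) : Riso d1 a1 b1 c1 d2 a2 b2 c2 ->
  d1 = d2 /\ a1 * (a1 + 1) = a2 * (a2 + 1) /\ b1 * (b1 + 1) = b2 * (b2 + 1)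
  /\ c1 * (c1 + 1) = c2 * (c2 + 1).
Proof.
case=> P [Q [PQ [QP [HA [HB [HC _]]]]]].
have hd : d1 = d2.
  have := mxtrace_mulC P Q; rewrite PQ QP !mxtrace1 => /eqP.
  by rewrite eqr_nat => /eqP [].
subst d2.
have nz : d1.+1%:R != 0 :> F by rewrite pnatr_eq0.
have ea := tr_inv PQ QP HA; have eb := tr_inv PQ QP HB; have ec := tr_inv PQ QP HC.
rewrite !trC ea eb in ec.
move: ea eb; rewrite !trA !trB => ea eb.
have ea' : a1 * (a1 + 1) = a2 * (a2 + 1).
  by apply: (mulfI nz); apply: (addIr (Kd d1)).
have eb' : b1 * (b1 + 1) = b2 * (b2 + 1).
  by apply: (mulfI nz); apply: (addIr (Kd d1)).
do 3 (split => //).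
have ed : Rdelta d1 a1 b1 c1 = Rdelta d1 a2 b2 c2.
  by apply: (mulfI nz); move: ec => /(congr1 (fun x => x + \tr (RB d1 a2 b2 c2) + \tr (RA d1 a2 b2 c2))); rewrite !subrK.
move: ed; rewrite /Rdelta -!addrA ea' eb' => /addrI /addrI /addrI //.
Qed.
End S.

Definition nv (m k : nat) : nat :=
  match k with
  | 0 => 1 | 1 => 4 * m * m+8 * m+4 | 2 => 4 * m * m | _ => 4 * m * m+16 * m+16 end%N.

Lemma nv_inj m k1 k2 : (k1 < 4)%N -> (k2 < 4)%N -> nv m k1 = nv m k2 -> k1 = k2.
Proof.
case: k1 => [|[|[|[|k1]]]] //; case: k2 => [|[|[|[|k2]]]] //=; lia.
Qed.

Definition code (f : rfam) : nat * nat * nat :=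
  match f with
  | Fam1 => (0,0,0) | Fam2a => (1,1,2) | Fam2b => (1,2,1) | Fam2c => (2,1,1)
  | Fam3 => (3,3,3) | Fam4a => (1,1,3) | Fam4b => (1,3,1) | Fam4c => (3,1,1)
  | Fam5 => (2,2,2) end%N.

Lemma code_inj f1 f2 : code f1 = code f2 -> f1 = f2.
Proof. by case: f1; case: f2. Qed.

Lemma code_lt f : [/\ ((code f).1.1 < 4)%N, ((code f).1.2 < 4)%N & ((code f).2 < 4)%N].
Proof. by case: f. Qed.

Definition n_of (f : rfam) (m : nat) : nat :=
  match f with
  | Fam1 => 2 * m+1 | Fam2a | Fam2b | Fam2c => 4 * m+2 | Fam3 => 4 * m+6
  | Fam4a | Fam4b | Fam4c => 4 * m+4 | Fam5 => 4 * m end%N.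

Lemma n_ofP f n : fam_valid f n -> n = n_of f (fam_d f n).
Proof.
case: f => /=; try (move=> /andP[H1 H2]; lia); try (move=> H; lia).
Qed.

Definition inv (F : numClosedFieldType) (x : F) := 16 * (x * (x + 1)) + 4.

Lemma abc_inv (F : numClosedFieldType) f n (a b c : F) :
  fam_valid f n -> fam_abc F f n = (a, b, c) ->
  [/\ inv a = (nv (fam_d f n) (code f).1.1)%:R,
      inv b = (nv (fam_d f n) (code f).1.2)%:R &
      inv c = (nv (fam_d f n) (code f).2)%:R].
Proof.
move=> /n_ofP Hn; move: (fam_d f n) Hn => m Hn.
case: f Hn => /= Hn; rewrite /fam_abc /inv ?Hn => -[<- <- <-] /=;
  rewrite ?(natrD, natrM); by split; field.
Qed.

Theorem proposition7p7 (F : numClosedFieldType) (f1 f2 : rfam) (n1 n2 : nat) :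
  fam_valid f1 n1 -> fam_valid f2 n2 -> (f1, n1) <> (f2, n2) ->
  ~ fam_iso F f1 n1 f2 n2.
Proof.
move=> V1 V2 Hne; rewrite /fam_iso.
case E1: (fam_abc F f1 n1) => [[a1 b1] c1].
case E2: (fam_abc F f2 n2) => [[a2 b2] c2].
move=> /iso_inv [hd [ha [hb hc]]].
have [A1 B1 C1] := abc_inv V1 E1; have [A2 B2 C2] := abc_inv V2 E2.
rewrite -hd in A2 B2 C2.
have [l1 l2 l3] := code_lt f1; have [l4 l5 l6] := code_lt f2.
have ea : (code f1).1.1 = (code f2).1.1.
  apply: (nv_inj (m := fam_d f1 n1)) => //; apply/eqP; rewrite -(eqr_nat F) -A1 -A2 /inv ha //.
have eb : (code f1).1.2 = (code f2).1.2.
  apply: (nv_inj (m := fam_d f1 n1)) => //; apply/eqP; rewrite -(eqr_nat F) -B1 -B2 /inv hb //.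
have ec : (code f1).2 = (code f2).2.
  apply: (nv_inj (m := fam_d f1 n1)) => //; apply/eqP; rewrite -(eqr_nat F) -C1 -C2 /inv hc //.
have ef : f1 = f2.
  apply: code_inj.
  by rewrite [code f1]surjective_pairing [(code f1).1]surjective_pairing ea eb ec -!surjective_pairing.
subst f2; apply: Hne; congr (_, _).
by rewrite (n_ofP V1) (n_ofP V2) hd.
Qed.
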